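(* Let $\alpha,\beta,\gamma$ be real (e.g. $>-1$) and $\delta\neq\pm1$. For all $0\le k\le n$, the polynomial $\mathcal J_{n,k}(x,y)$ satisfies $L_1\mathcal J_{n,k}=\mu_n\,\mathcal J_{n,k}$, where $\mu_n=-\frac n2$ if $n$ is even and $\mu_n=\frac{n+\alpha+\beta+\gamma+2}{2}$ if $n$ is odd, and $$L_1=G_5R_xR_y\partial_y+G_6R_y\partial_y+G_7R_xR_y\partial_x+G_8R_x\partial_x+G_1R_xR_y+G_2R_x+G_3R_y-(G_1+G_2+G_3)\,\mathbb I,$$ with $G_1=\frac{x[1+\beta+\gamma-y(\alpha+\beta+\gamma+2)]-\delta[y(\alpha+\gamma+1)-\gamma]}{4xy}$, $G_2=-\frac{x[x(\beta+\gamma+1)-\beta y]+\delta(y+\gamma x)}{4x^2y}$, $G_3=-\delta\,\frac{x+\alpha xy-y[y(\alpha+\gamma+1)-\gamma]}{4xy^2}$, $G_5=\frac{(\delta+x)(y-1)}{2x}$, $G_6=\frac{\delta(x-y)(y-1)}{2xy}$, $G_7=\frac{(\delta+x)(y-1)}{2y}$, $G_8=\frac{(\delta+x)(x-y)}{2xy}$ (all functions of $(x,y)$).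
   Context: $R_x f(x,y)=f(-x,y)$, $R_yf(x,y)=f(x,-y)$, $\mathbb I$ is the identity; products of operators are compositions (rightmost acts first), and $G_i$ acts by multiplication; the identity is between rational functions of $(x,y)$. For real $a,b$ and $c^2\neq1$, the Big $-1$ Jacobi polynomials are $$J_{n}(x;a,b,c)=\begin{cases}{}_2F_1\!\left(\begin{smallmatrix}-\frac n2,\ \frac{n+a+b+2}{2}\\ \frac{a+1}{2}\end{smallmatrix};\frac{1-x^2}{1-c^2}\right)+\frac{n(1-x)}{(1+c)(a+1)}\,{}_2F_1\!\left(\begin{smallmatrix}1-\frac n2,\ \frac{n+a+b+2}{2}\\ \frac{a+3}{2}\end{smallmatrix};\frac{1-x^2}{1-c^2}\right), & n\text{ even},\\[2mm] {}_2F_1\!\left(\begin{smallmatrix}-\frac{n-1}2,\ \frac{n+a+b+1}{2}\\ \frac{a+1}{2}\end{smallmatrix};\frac{1-x^2}{1-c^2}\right)-\frac{(n+a+b+1)(1-x)}{(1+c)(a+1)}\,{}_2F_1\!\left(\begin{smallmatrix}-\frac{n-1}2,\ \frac{n+a+b+3}{2}\\ \frac{a+3}{2}\end{smallmatrix};\frac{1-x^2}{1-c^2}\right), & n\text{ odd}.\end{cases}$$ Let $\rho_k(y)=y^k(1-\delta^2/y^2)^{k/2}$ for $k$ even and $\rho_k(y)=y^k(1-\delta^2/y^2)^{(k-1)/2}(1+\delta/y)$ for $k$ odd, and $$\mathcal{J}_{n,k}(x,y)=J_{n-k}\big(y;\alpha,2k+\beta+\gamma+1,(-1)^k\delta\big)\,\rho_k(y)\,J_k\Big(\frac{x}{y};\gamma,\beta,\frac{\delta}{y}\Big).$$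 *)

(* Defs.v *)
From Stdlib Require Import Reals Lra Lia Arith Factorial.
Open Scope R_scope.

Fixpoint poch (a : R) (j : nat) : R :=
  match j with
  | O => 1
  | S j' => poch a j' * (a + INR j')
  end.

(* Terminating Gauss hypergeometric function 2F1(-m, b; c; z).
   Since (-m)_j = 0 for j > m, the series is the finite sum over j = 0..m. *)
Definition F21 (m : nat) (b c z : R) : R :=
  sum_f_R0 (fun j => poch (- INR m) j * poch b j / (poch c j * INR (fact j)) * z ^ j) m.

Definition bigJ (n : nat) (a b c x : R) : R :=
  let z := (1 - x ^ 2) / (1 - c ^ 2) in
  if Nat.even n then
    F21 (Nat.div2 n) ((INR n + a + b + 2) / 2) ((a + 1) / 2) z
    + INR n * (1 - x) / ((1 + c) * (a + 1))
      * F21 (Nat.div2 n - 1) ((INR n + a + b + 2) / 2) ((a + 3) / 2) z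
  else
    F21 (Nat.div2 n) ((INR n + a + b + 1) / 2) ((a + 1) / 2) z
    - (INR n + a + b + 1) * (1 - x) / ((1 + c) * (a + 1))
      * F21 (Nat.div2 n) ((INR n + a + b + 3) / 2) ((a + 3) / 2) z.

Definition rho (delta : R) (k : nat) (y : R) : R :=
  if Nat.even k then y ^ k * (1 - delta ^ 2 / y ^ 2) ^ (Nat.div2 k)
  else y ^ k * (1 - delta ^ 2 / y ^ 2) ^ (Nat.div2 k) * (1 + delta / y).

Definition calJ (alpha beta gamma delta : R) (n k : nat) (x y : R) : R :=
  bigJ (n - k) alpha (2 * INR k + beta + gamma + 1) ((-1) ^ k * delta) y
  * rho delta k y
  * bigJ k gamma beta (delta / y) (x / y).

Definition G1 (alpha beta gamma delta x y : R) : R :=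
  (x * (1 + beta + gamma - y * (alpha + beta + gamma + 2))
   - delta * (y * (alpha + gamma + 1) - gamma)) / (4 * x * y).
Definition G2 (alpha beta gamma delta x y : R) : R :=
  - (x * (x * (beta + gamma + 1) - beta * y) + delta * (y + gamma * x)) / (4 * x ^ 2 * y).
Definition G3 (alpha beta gamma delta x y : R) : R :=
  - delta * ((x + alpha * x * y - y * (y * (alpha + gamma + 1) - gamma)) / (4 * x * y ^ 2)).
Definition G5 (delta x y : R) : R := (delta + x) * (y - 1) / (2 * x).
Definition G6 (delta x y : R) : R := delta * (x - y) * (y - 1) / (2 * x * y).
Definition G7 (delta x y : R) : R := (delta + x) * (y - 1) / (2 * y).
Definition G8 (delta x y : R) : R := (delta + x) * (x - y) / (2 * x * y).

Definition mu (alpha beta gamma : R) (n : nat) : R :=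
  if Nat.even n then - INR n / 2 else (INR n + alpha + beta + gamma + 2) / 2.

(* (L_1 f)(x,y), given f and its partial derivatives fx = d_x f, fy = d_y f.
   R_x R_y d_y f evaluated at (x,y) is (d_y f)(-x,-y), etc. *)
Definition L1 (alpha beta gamma delta : R) (f fx fy : R -> R -> R) (x y : R) : R :=
  let g1 := G1 alpha beta gamma delta x y in
  let g2 := G2 alpha beta gamma delta x y in
  let g3 := G3 alpha beta gamma delta x y in
  G5 delta x y * fy (- x) (- y)
  + G6 delta x y * fy x (- y)
  + G7 delta x y * fx (- x) (- y)
  + G8 delta x y * fx (- x) y
  + g1 * f (- x) (- y)
  + g2 * f (- x) y
  + g3 * f x (- y)
  - (g1 + g2 + g3) * f x y.

(* Main.v *)
Require Import Defs.
From Coquelicot Require Import Coquelicot.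
From Stdlib Require Import Reals Lra Lia Field Arith.
Open Scope R_scope.


Definition cf (m : nat) (b c : R) (j : nat) : R :=
  poch (- INR m) j * poch b j / (poch c j * INR (fact j)).
Definition PS (a : nat -> R) (N : nat) (z : R) : R := sum_f_R0 (fun j => a j * z ^ j) N.
Definition sh (a : nat -> R) (j : nat) : R := match j with O => 0 | S j' => a j' end.
Definition dF21 (m : nat) (b c z : R) : R := PS (fun j => cf m b c (S j) * INR (S j)) m z.

Lemma poch_S_l a j : poch a (S j) = a * poch (a+1) j.
Proof.
  induction j as [|j IH]; cbn [poch] in *; [rewrite INR_0; ring|].
  rewrite IH. rewrite S_INR. ring.
Qed.

Lemma poch_zero m j : (m < j)%nat -> poch (- INR m) j = 0.
Proof.
  induction j as [|j IH]; intros H; [lia|].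
  simpl. destruct (Nat.eq_dec m j) as [->|Hne].
  - cbn [poch]. ring.
  - cbn [poch]. rewrite IH by lia. ring.
Qed.

Lemma poch_pos c j : 0 < c -> 0 < poch c j.
Proof.
  intros Hc; induction j as [|j IH]; cbn [poch]; [lra|].
  apply Rmult_lt_0_compat; auto. pose proof (pos_INR j); lra.
Qed.

Lemma cf_zero m b c j : (m < j)%nat -> cf m b c j = 0.
Proof. intros H; unfold cf; rewrite poch_zero by auto; unfold Rdiv; ring. Qed.

Lemma F21_PS m b c z : F21 m b c z = PS (cf m b c) m z.
Proof. reflexivity. Qed.

Lemma PS_ext a M N z : (forall j, (M < j)%nat -> a j = 0) -> (M <= N)%nat -> PS a N z = PS a M z.
Proof.
  intros Ha HMN; induction HMN as [|N HMN IH]; [reflexivity|].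
  unfold PS in *; simpl. rewrite IH, Ha by lia. ring.
Qed.

Lemma PS_add a b N z : PS a N z + PS b N z = PS (fun j => a j + b j) N z.
Proof. unfold PS; induction N; simpl; [ring|]. rewrite <- IHN; ring. Qed.

Lemma PS_scal c a N z : c * PS a N z = PS (fun j => c * a j) N z.
Proof. unfold PS; induction N; simpl; [ring|]. rewrite <- IHN; ring. Qed.

Lemma PS_shift_gen a N z : z * PS a N z = PS (sh a) N z + a N * z ^ S N.
Proof.
  unfold PS; induction N as [|N IH]; simpl; [ring|].
  rewrite Rmult_plus_distr_l, IH. simpl. ring.
Qed.

Lemma PS_shift a N z : a N = 0 -> z * PS a N z = PS (sh a) N z.
Proof. intros H; rewrite PS_shift_gen, H; ring. Qed.

Lemma PS_zero a N z : (forall j, a j = 0) -> PS a N z = 0.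
Proof. intros H; unfold PS; induction N; simpl; rewrite H; [ring|]. rewrite IHN; ring. Qed.

Lemma is_derive_eq (f : R -> R) (x l l' : R) : is_derive f x l -> l = l' -> is_derive f x l'.
Proof. intros H <-; exact H. Qed.

Lemma PS_derive (a : nat -> R) (N : nat) (z : R) :
  is_derive (fun z => PS a N z) z (PS (fun j => a (S j) * INR (S j)) N z - a (S N) * INR (S N) * z ^ N).
Proof.
  induction N as [|N IH].
  - apply (is_derive_eq _ _ 0).
    + apply (is_derive_ext (fun _ => a 0%nat * 1)).
      * intro t; unfold PS; simpl; ring.
      * auto_derive; [exact I| ring].
    + unfold PS; simpl; ring.
  - apply (is_derive_eq _ _ ((PS (fun j => a (S j) * INR (S j)) N z - a (S N) * INR (S N) * z ^ N)
         + a (S N) * (INR (S N) * 1 * z ^ Init.Nat.pred (S N)))).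
    + apply (is_derive_ext (fun t => PS a N t + a (S N) * t ^ S N)).
      * intro t; unfold PS; simpl; ring.
      * apply (is_derive_plus (fun t => PS a N t) (fun t => a (S N) * t ^ S N)); [exact IH|].
        auto_derive; [exact I|]. change (match N with 0%nat => 1 | S _ => INR N + 1 end) with (INR (S N)). cbn [Init.Nat.pred]. ring.
    + unfold PS; cbn [sum_f_R0 Init.Nat.pred]. ring.
Qed.

Lemma F21_derive (m : nat) (b c z : R) : is_derive (F21 m b c) z (dF21 m b c z).
Proof.
  apply (is_derive_eq _ _ _ _ (PS_derive (cf m b c) m z)).
  unfold dF21. rewrite (cf_zero m b c (S m)) by lia. ring.
Qed.

Lemma PS_eq a b N z : (forall j, a j = b j) -> PS a N z = PS b N z.
Proof. intros H; unfold PS; induction N; simpl; rewrite H; [ring|]. rewrite IHN; ring. Qed.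

Lemma PS_sub a b N z : PS a N z - PS b N z = PS (fun j => a j - b j) N z.
Proof. unfold PS; induction N; simpl; [ring|]. rewrite <- IHN; ring. Qed.

Lemma sh_d (g : nat -> R) j : sh (fun j => g (S j) * INR (S j)) j = INR j * g j.
Proof. destruct j; cbn [sh]; [simpl; ring| ring]. Qed.

Lemma fact_S_INR j : INR (fact (S j)) = INR (S j) * INR (fact j).
Proof. rewrite <- mult_INR. reflexivity. Qed.

Lemma cf0 m b c : cf m b c 0 = 1.
Proof. unfold cf; simpl; field. Qed.

Lemma INR_S_ne j : INR (S j) <> 0.
Proof. apply not_0_INR; lia. Qed.

Lemma poch_ne c j : 0 < c -> poch c j <> 0.
Proof. intros H; apply Rgt_not_eq, poch_pos; auto. Qed.

Ltac ext_tac := first [lia | intros; cbv beta; rewrite cf_zero by lia; ring | intros; apply cf_zero; lia].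

Lemma relE1 m e cp z : 0 < cp ->
  cp * dF21 m e cp z = - INR m * (e * F21 (m-1) e (cp+1) z + z * dF21 (m-1) e (cp+1) z).
Proof.
  intros Hcp. destruct m as [|m'].
  - unfold dF21, PS; simpl. rewrite cf_zero by lia. simpl; ring.
  - replace (S m' - 1)%nat with m' by lia.
    set (N := S (S m')).
    unfold dF21; rewrite !F21_PS.
    rewrite <- (PS_ext _ (S m') N) by ext_tac.
    rewrite <- (PS_ext (cf m' e (cp+1)) m' N) by ext_tac.
    rewrite <- (PS_ext (fun j => cf m' e (cp+1) (S j) * INR (S j)) m' N) by ext_tac.
    rewrite PS_shift by (unfold N; rewrite cf_zero by lia; ring).
    rewrite !PS_scal, PS_add, PS_scal. apply PS_eq. intro j.
    rewrite sh_d. unfold cf.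
    rewrite (poch_S_l (- INR (S m')) j), (poch_S_l cp j), fact_S_INR.
    replace (- INR (S m') + 1) with (- INR m') by (rewrite S_INR; ring).
    cbn [poch]. rewrite S_INR.
    pose proof (poch_ne (cp+1) j ltac:(lra)). pose proof (INR_fact_neq_0 j).
    pose proof (pos_INR j).
    pose proof (INR_S_ne j).
    field. repeat split; auto; lra.
Qed.

Ltac coef_fin j :=
  pose proof (INR_fact_neq_0 j); pose proof (pos_INR j); pose proof (INR_S_ne j).

Lemma relE2 m e cp z : 0 < cp ->
  INR m * (z*(1-z)*dF21 (m-1) e (cp+1) z - (e*z - cp)*F21 (m-1) e (cp+1) z - cp*F21 m e cp z) = 0.
Proof.
  intros Hcp. destruct m as [|m'].
  - simpl; ring.
  - replace (S m' - 1)%nat with m' by lia.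
    set (N := S (S m')).
    unfold dF21; rewrite !F21_PS.
    rewrite <- (PS_ext (cf (S m') e cp) (S m') N) by ext_tac.
    rewrite <- (PS_ext (cf m' e (cp+1)) m' N) by ext_tac.
    rewrite <- (PS_ext (fun j => cf m' e (cp+1) (S j) * INR (S j)) m' N) by ext_tac.
    replace (z * (1 - z) * PS (fun j => cf m' e (cp + 1) (S j) * INR (S j)) N z)
      with (z * PS (fun j => cf m' e (cp + 1) (S j) * INR (S j)) N z
            - z * (z * PS (fun j => cf m' e (cp + 1) (S j) * INR (S j)) N z)) by ring.
    replace ((e * z - cp) * PS (cf m' e (cp + 1)) N z) with
      (e * (z * PS (cf m' e (cp + 1)) N z) - cp * PS (cf m' e (cp + 1)) N z) by ring.
    rewrite !(PS_shift (fun j => cf m' e (cp + 1) (S j) * INR (S j))) by (unfold N; rewrite cf_zero by lia; ring).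
    rewrite (PS_shift (sh _)) by (unfold N; cbn [sh]; rewrite cf_zero by lia; ring).
    rewrite (PS_shift (cf m' e (cp+1))) by (unfold N; rewrite cf_zero by lia; ring).
    repeat rewrite ?PS_scal, ?PS_sub.
    rewrite PS_zero; [ring|]. intro j.
    destruct j as [|i].
    + cbn [sh]. rewrite !cf0. ring.
    + cbn [sh]. rewrite sh_d. unfold cf.
      rewrite (poch_S_l (- INR (S m')) i), (poch_S_l cp i), !fact_S_INR.
      replace (- INR (S m') + 1) with (- INR m') by (rewrite S_INR; ring).
      cbn [poch]. rewrite !S_INR.
      pose proof (poch_ne (cp+1) i ltac:(lra)). coef_fin i.
      field. repeat split; auto; lra.
Qed.

Lemma relO1 m e cp z : 0 < cp ->
  cp * dF21 m e cp z = e * (- INR m * F21 m (e+1) (cp+1) z + z * dF21 m (e+1) (cp+1) z).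
Proof.
  intros Hcp. set (N := S m).
  unfold dF21; rewrite !F21_PS.
  rewrite <- (PS_ext (fun j => cf m e cp (S j) * INR (S j)) m N) by ext_tac.
  rewrite <- (PS_ext (cf m (e+1) (cp+1)) m N) by ext_tac.
  rewrite <- (PS_ext (fun j => cf m (e+1) (cp+1) (S j) * INR (S j)) m N) by ext_tac.
  rewrite PS_shift by (unfold N; rewrite cf_zero by lia; ring).
  rewrite !PS_scal, PS_add, PS_scal. apply PS_eq. intro j.
  rewrite sh_d. unfold cf.
  rewrite (poch_S_l e j), (poch_S_l cp j), fact_S_INR.
  cbn [poch].
  pose proof (poch_ne (cp+1) j ltac:(lra)). coef_fin j.
  field. repeat split; auto; lra.
Qed.

Lemma relO2 m e cp z : 0 < cp ->
  z*(1-z)*dF21 m (e+1) (cp+1) z - (- INR m * z - cp)*F21 m (e+1) (cp+1) z - cp*F21 m e cp z = 0.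
Proof.
  intros Hcp. set (N := S (S m)).
  unfold dF21; rewrite !F21_PS.
  rewrite <- (PS_ext (cf m e cp) m N) by ext_tac.
  rewrite <- (PS_ext (cf m (e+1) (cp+1)) m N) by ext_tac.
  rewrite <- (PS_ext (fun j => cf m (e+1) (cp+1) (S j) * INR (S j)) m N) by ext_tac.
  replace (z * (1 - z) * PS (fun j => cf m (e+1) (cp + 1) (S j) * INR (S j)) N z)
    with (z * PS (fun j => cf m (e+1) (cp + 1) (S j) * INR (S j)) N z
          - z * (z * PS (fun j => cf m (e+1) (cp + 1) (S j) * INR (S j)) N z)) by ring.
  replace ((- INR m * z - cp) * PS (cf m (e+1) (cp + 1)) N z) with
    ((- INR m) * (z * PS (cf m (e+1) (cp + 1)) N z) - cp * PS (cf m (e+1) (cp + 1)) N z) by ring.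
  rewrite !(PS_shift (fun j => cf m (e+1) (cp + 1) (S j) * INR (S j))) by (unfold N; rewrite cf_zero by lia; ring).
  rewrite (PS_shift (sh _)) by (unfold N; cbn [sh]; rewrite cf_zero by lia; ring).
  rewrite (PS_shift (cf m (e+1) (cp+1))) by (unfold N; rewrite cf_zero by lia; ring).
  repeat rewrite ?PS_scal, ?PS_sub.
  apply PS_zero. intro j.
  destruct j as [|i].
  + cbn [sh]. rewrite !cf0. ring.
  + cbn [sh]. rewrite sh_d. unfold cf.
    rewrite (poch_S_l e i), (poch_S_l cp i), !fact_S_INR.
    cbn [poch]. rewrite !S_INR.
    pose proof (poch_ne (cp+1) i ltac:(lra)). coef_fin i.
    field. repeat split; auto; lra.
Qed.


Definition eP (n : nat) (a b : R) := if Nat.even n then (INR n + a + b + 2)/2 else (INR n + a + b + 1)/2.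
Definition sP (n : nat) (a b : R) := if Nat.even n then INR n/(a+1) else -(INR n + a + b + 1)/(a+1).
Definition muP (n : nat) (a b : R) := if Nat.even n then eP n a b else - INR (Nat.div2 n).
Definition FP (n : nat) (a b z : R) := F21 (Nat.div2 n) (eP n a b) ((a+1)/2) z.
Definition GP (n : nat) (a b z : R) := if Nat.even n then F21 (Nat.div2 n - 1) (eP n a b) ((a+1)/2+1) z
  else F21 (Nat.div2 n) (eP n a b + 1) ((a+1)/2+1) z.
Definition dFP (n : nat) (a b z : R) := dF21 (Nat.div2 n) (eP n a b) ((a+1)/2) z.
Definition dGP (n : nat) (a b z : R) := if Nat.even n then dF21 (Nat.div2 n - 1) (eP n a b) ((a+1)/2+1) z
  else dF21 (Nat.div2 n) (eP n a b + 1) ((a+1)/2+1) z.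
Definition zz (c x : R) := (1 - x^2)/(1 - c^2).

Lemma INR_even n : Nat.even n = true -> INR n = 2 * INR (Nat.div2 n).
Proof.
  intros H. rewrite (Nat.div2_odd n) at 1. unfold Nat.odd; rewrite H. cbn [negb Nat.b2n].
  rewrite plus_INR, mult_INR. simpl INR. ring.
Qed.

Lemma INR_odd n : Nat.even n = false -> INR n = 2 * INR (Nat.div2 n) + 1.
Proof.
  intros H. rewrite (Nat.div2_odd n) at 1. unfold Nat.odd; rewrite H. cbn [negb Nat.b2n].
  rewrite plus_INR, mult_INR. simpl INR. ring.
Qed.

Lemma bigJ_form n a b c x : a + 1 <> 0 ->
  bigJ n a b c x = FP n a b (zz c x) + sP n a b * ((1-x)/(1+c)) * GP n a b (zz c x).
Proof.
  intros Ha. unfold bigJ, FP, GP, sP, eP, zz.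
  replace ((a+3)/2) with ((a+1)/2+1) by field.
  destruct (Nat.even n).
  - destruct (Req_dec (1+c) 0) as [Hc|Hc].
    + rewrite Hc. unfold Rdiv. rewrite Rmult_0_l, Rinv_0. ring.
    + field; auto.
  - replace ((INR n + a + b + 3)/2) with ((INR n + a + b + 1)/2 + 1) by field.
    destruct (Req_dec (1+c) 0) as [Hc|Hc].
    + rewrite Hc. unfold Rdiv. rewrite Rmult_0_l, Rinv_0. ring.
    + field; auto.
Qed.

Lemma rel_dF n a b z : 0 < (a+1)/2 ->
  dFP n a b z = - sP n a b * (muP n a b * GP n a b z + z * dGP n a b z).
Proof.
  intros Hc. unfold dFP, sP, muP, GP, dGP.
  destruct (Nat.even n) eqn:He.
  - apply (Rmult_eq_reg_l ((a+1)/2)); [|lra].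
    rewrite relE1 by auto. rewrite (INR_even n He). field. lra.
  - apply (Rmult_eq_reg_l ((a+1)/2)); [|lra].
    rewrite relO1 by auto. unfold eP; rewrite He. field. lra.
Qed.

Lemma rel_G n a b z : 0 < (a+1)/2 ->
  sP n a b * (z*(1-z)*dGP n a b z - (muP n a b * z - (a+1)/2) * GP n a b z - (a+1)/2 * FP n a b z) = 0.
Proof.
  intros Hc. unfold FP, sP, muP, GP, dGP.
  destruct (Nat.even n) eqn:He.
  - rewrite (INR_even n He).
    pose proof (relE2 (Nat.div2 n) (eP n a b) ((a+1)/2) z Hc) as H.
    replace (2 * INR (Nat.div2 n) / (a + 1)) with ((2/(a+1)) * INR (Nat.div2 n)) by (field; lra).
    rewrite Rmult_assoc, H. ring.
  - rewrite relO2 by auto. ring.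
Qed.


Lemma FP_derive n a b (z : R) : is_derive (FP n a b) z (dFP n a b z).
Proof. unfold FP, dFP. apply F21_derive. Qed.

Lemma GP_derive n a b (z : R) : is_derive (GP n a b) z (dGP n a b z).
Proof.
  unfold GP, dGP. destruct (Nat.even n); apply F21_derive.
Qed.

Lemma derive_H n a b (Z V : R -> R) (t Z' V' : R) : is_derive Z t Z' -> is_derive V t V' ->
  is_derive (fun u => FP n a b (Z u) + sP n a b * V u * GP n a b (Z u)) t
   (Z' * (dFP n a b (Z t) + sP n a b * V t * dGP n a b (Z t)) + sP n a b * V' * GP n a b (Z t)).
Proof.
  intros HZ HV.
  apply (is_derive_eq _ _ (Z' * dFP n a b (Z t) + ((sP n a b * V') * GP n a b (Z t) + (sP n a b * V t) * (Z' * dGP n a b (Z t))))).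
  - apply (is_derive_plus (fun u => FP n a b (Z u)) (fun u => sP n a b * V u * GP n a b (Z u))).
    + exact (is_derive_comp (FP n a b) Z t _ _ (FP_derive n a b (Z t)) HZ).
    + apply (is_derive_mult (fun u => sP n a b * V u) (fun u => GP n a b (Z u))).
      * apply is_derive_scal. exact HV.
      * exact (is_derive_comp (GP n a b) Z t _ _ (GP_derive n a b (Z t)) HZ).
      * intros; apply Rmult_comm.
  - ring.
Qed.

Definition rc (d : R) (k : nat) (t : R) := (t^2 - d^2)^(Nat.div2 k) * (if Nat.even k then 1 else t + d).
Definition rcd (d : R) (k : nat) (t : R) :=
  (t^2 - d^2)^(Nat.div2 k) * (2 * INR (Nat.div2 k) * t / (t^2 - d^2)) * (if Nat.even k then 1 else t + d)
  + (if Nat.even k then 0 else (t^2 - d^2)^(Nat.div2 k)).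

Lemma rho_rc d k t : t <> 0 -> rho d k t = rc d k t.
Proof.
  intros Ht. unfold rho, rc.
  assert (Hk := Nat.div2_odd k). unfold Nat.odd in Hk.
  set (p := Nat.div2 k) in *.
  assert (E : t^2 * (1 - d^2/t^2) = t^2 - d^2) by (field; auto).
  destruct (Nat.even k); cbn [negb Nat.b2n] in Hk; rewrite Hk.
  - rewrite Nat.add_0_r, pow_mult, <- Rpow_mult_distr, E. ring.
  - rewrite pow_add, pow_mult.
    replace ((t ^ 2) ^ p * t ^ 1 * (1 - d ^ 2 / t ^ 2) ^ p * (1 + d / t)) with
      (((t^2) ^ p * (1 - d ^ 2 / t ^ 2) ^ p) * (t * (1 + d/t))) by ring.
    rewrite <- Rpow_mult_distr, E. field. auto.
Qed.

Lemma rc_derive d k (t : R) : t^2 - d^2 <> 0 -> is_derive (rc d k) t (rcd d k t).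
Proof.
  intros Ht. unfold rc, rcd. set (p := Nat.div2 k).
  destruct (Nat.even k); (auto_derive; [exact I|]);
  (destruct p as [|p]; cbn [Init.Nat.pred];
   replace (t * (t * 1) + - (d * (d * 1))) with (t^2 - d^2) by ring;
   rewrite <- ?tech_pow_Rmult, ?INR_0; field; (contradict Ht; ring_simplify; ring_simplify in Ht; exact Ht)).
Qed.

Lemma loc_ne0 (t : R) : t <> 0 -> locally t (fun u : R => u <> 0).
Proof.
  intros H. exists (mkposreal (Rabs t) (Rabs_pos_lt t H)). intros u Hu Hu0. subst u.
  unfold ball in Hu; simpl in Hu. unfold AbsRing_ball, abs, minus, plus, opp in Hu; simpl in Hu.
  rewrite Rplus_0_l, Rabs_Ropp in Hu. lra.
Qed.

Lemma rho_derive d k (t : R) : t <> 0 -> t^2 - d^2 <> 0 -> is_derive (rho d k) t (rcd d k t).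
Proof.
  intros H0 H1. apply (is_derive_ext_loc (rc d k)).
  - generalize (loc_ne0 t H0). apply filter_imp. intros u Hu. symmetry. apply rho_rc; auto.
  - apply rc_derive; auto.
Qed.


Definition J1 al be ga d n k t := bigJ (n-k) al (2*INR k+be+ga+1) ((-1)^k*d) t.
Definition J1d al be ga d n k t :=
  let c1 := (-1)^k*d in let n1 := (n-k)%nat in let b1 := 2*INR k+be+ga+1 in
  (-(2*t)/(1-c1^2)) * (dFP n1 al b1 (zz c1 t) + sP n1 al b1 * ((1-t)/(1+c1)) * dGP n1 al b1 (zz c1 t))
  + sP n1 al b1 * (-(1/(1+c1))) * GP n1 al b1 (zz c1 t).
Definition J2 be ga d k x y := bigJ k ga be (d/y) (x/y).
Definition J2x be ga d k x y :=
  (-(2*x)/(y^2-d^2)) * (dFP k ga be (zz (d/y) (x/y)) + sP k ga be * ((1-x/y)/(1+d/y)) * dGP k ga be (zz (d/y) (x/y)))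
  + sP k ga be * (-(1/(y+d))) * GP k ga be (zz (d/y) (x/y)).
Definition J2y be ga d k x y :=
  (2*y*(x^2-d^2)/(y^2-d^2)^2) * (dFP k ga be (zz (d/y) (x/y)) + sP k ga be * ((1-x/y)/(1+d/y)) * dGP k ga be (zz (d/y) (x/y)))
  + sP k ga be * ((x+d)/(y+d)^2) * GP k ga be (zz (d/y) (x/y)).
Definition fxD al be ga d n k x y := J1 al be ga d n k y * rho d k y * J2x be ga d k x y.
Definition fyD al be ga d n k x y :=
  J1d al be ga d n k y * rho d k y * J2 be ga d k x y + J1 al be ga d n k y * rcd d k y * J2 be ga d k x y
  + J1 al be ga d n k y * rho d k y * J2y be ga d k x y.

Lemma c1_sq k d : ((-1)^k*d)^2 = d^2.
Proof. rewrite Rpow_mult_distr, <- pow_mult, Nat.mul_comm, pow_mult. replace ((-1)^2) with 1 by ring. rewrite pow1. ring. Qed.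

Lemma c1_cases k d : (-1)^k*d = d \/ (-1)^k*d = -d.
Proof.
  destruct (Nat.Even_or_Odd k) as [[p ->]|[p ->]].
  - left. rewrite pow_1_even. ring.
  - right. rewrite Nat.add_1_r, pow_1_odd. ring.
Qed.

Lemma ne_aux y d : y <> 0 -> y^2-d^2 <> 0 -> 1 + - (d * / y * (d * / y * 1)) <> 0.
Proof.
  intros H1 H2 H. apply H2.
  replace (y^2-d^2) with (y^2 * (1 + - (d * / y * (d * / y * 1)))) by (field; auto). rewrite H; ring.
Qed.

Lemma ne_aux2 y d : y <> 0 -> y + d <> 0 -> 1 + d / y <> 0.
Proof.
  intros H1 H2 H. apply H2.
  replace (y+d) with (y * (1 + d/y)) by (field; auto). rewrite H; ring.
Qed.

Lemma dx_ok al be ga d n k x y : -1 < ga -> y <> 0 -> y^2 - d^2 <> 0 -> y + d <> 0 ->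
  is_derive (fun t => calJ al be ga d n k t y) x (fxD al be ga d n k x y).
Proof.
  intros Hg Hy Hyd Hyd'.
  unfold fxD, J2x.
  apply (is_derive_ext (fun t => (J1 al be ga d n k y * rho d k y) *
     (FP k ga be ((fun t => zz (d/y) (t/y)) t) + sP k ga be * ((fun t => (1 - t/y)/(1+d/y)) t) * GP k ga be ((fun t => zz (d/y) (t/y)) t)))).
  - intro t. unfold calJ, J1. rewrite (bigJ_form k ga be). reflexivity. lra.
  - apply is_derive_scal. apply (derive_H k ga be (fun t => zz (d/y) (t/y)) (fun t => (1 - t/y)/(1+d/y))).
    + unfold zz. auto_derive; [exact I|]. field. repeat split; auto.
    + auto_derive; [exact I|]. field. repeat split; auto.
Qed.

Lemma dy_ok al be ga d n k x y : -1 < al -> -1 < ga -> d <> 1 -> d <> -1 ->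
  y <> 0 -> y^2 - d^2 <> 0 -> y + d <> 0 ->
  is_derive (fun t => calJ al be ga d n k x t) y (fyD al be ga d n k x y).
Proof.
  intros Ha Hg Hd1 Hd2 Hy Hyd Hyd'.
  set (c1 := (-1)^k*d). set (n1 := (n-k)%nat). set (b1 := 2*INR k+be+ga+1).
  assert (Hc1 : 1 - c1^2 <> 0) by (unfold c1; rewrite c1_sq; intro H;
     assert (H' : (d-1)*(d+1) = 0) by (replace ((d-1)*(d+1)) with (-(1-d^2)) by ring; rewrite H; ring); apply Rmult_integral in H'; lra).
  assert (Hc2 : 1 + c1 <> 0) by (unfold c1; destruct (c1_cases k d) as [-> | ->]; lra).
  assert (HJ1 : is_derive (J1 al be ga d n k) y (J1d al be ga d n k y)).
  { apply (is_derive_ext (fun t => FP n1 al b1 ((fun t => zz c1 t) t) + sP n1 al b1 * ((fun t => (1-t)/(1+c1)) t) * GP n1 al b1 ((fun t => zz c1 t) t))).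
    - intro t. unfold J1. rewrite (bigJ_form (n-k) al). reflexivity. lra.
    - apply (derive_H n1 al b1 (fun t => zz c1 t) (fun t => (1-t)/(1+c1))).
      + unfold zz. auto_derive; [exact I|]. unfold c1 in *. field. auto.
      + auto_derive; [exact I|]. unfold c1 in *. field. auto. }
  assert (HJ2 : is_derive (fun t => J2 be ga d k x t) y (J2y be ga d k x y)).
  { apply (is_derive_ext (fun t => FP k ga be ((fun t => zz (d/t) (x/t)) t) + sP k ga be * ((fun t => (1-x/t)/(1+d/t)) t) * GP k ga be ((fun t => zz (d/t) (x/t)) t))).
    - intro t. unfold J2. rewrite (bigJ_form k ga be). reflexivity. lra.
    - apply (derive_H k ga be (fun t => zz (d/t) (x/t)) (fun t => (1-x/t)/(1+d/t))).
      + unfold zz. auto_derive; [repeat split; auto; apply ne_aux; auto|].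
        field. repeat split; auto; apply ne_aux; auto.
      + auto_derive; [repeat split; auto; apply ne_aux2; auto|]. field. repeat split; auto. }
  apply (is_derive_ext (fun t => J1 al be ga d n k t * rho d k t * J2 be ga d k x t)).
  { intro t; reflexivity. }
  apply (is_derive_eq _ _ ((J1d al be ga d n k y * rho d k y + J1 al be ga d n k y * rcd d k y) * J2 be ga d k x y
     + (J1 al be ga d n k y * rho d k y) * J2y be ga d k x y)).
  - apply (is_derive_mult (fun t => J1 al be ga d n k t * rho d k t) (fun t => J2 be ga d k x t)).
    + apply (is_derive_mult (J1 al be ga d n k) (rho d k)).
      * exact HJ1.
      * apply rho_derive; auto.
      * intros; apply Rmult_comm.
    + exact HJ2.
    + intros; apply Rmult_comm.
  - unfold fyD. ring.
Qed.


Lemma calJ_eq al be ga d n k u t :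
  calJ al be ga d n k u t = J1 al be ga d n k t * rho d k t * J2 be ga d k u t.
Proof. reflexivity. Qed.

Lemma zz_neg c t : zz c (-t) = zz c t.
Proof. unfold zz. f_equal. f_equal. ring. Qed.

Lemma zz_nd c u y : zz c (-u / y) = zz c (u / y).
Proof. unfold zz, Rdiv. f_equal. f_equal. ring. Qed.

Lemma zz_negy d u y : y <> 0 -> zz (d / - y) (u / - y) = zz (d / y) (u / y).
Proof. intros H. unfold zz. f_equal; f_equal; field; auto. Qed.

Lemma main_id al be ga d n1 k x y :
  -1 < al -> -1 < be -> -1 < ga -> d <> 1 -> d <> -1 ->
  x <> 0 -> y <> 0 -> y^2 - d^2 <> 0 ->
  L1 al be ga d (calJ al be ga d (n1 + k) k) (fxD al be ga d (n1+k) k) (fyD al be ga d (n1+k) k) x y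
  = mu al be ga (n1+k) * calJ al be ga d (n1+k) k x y.
Proof.
  intros Ha Hb Hg Hd1 Hd2 Hx Hy Hyd.
  assert (Hyd1 : y + d <> 0) by (intro H; apply Hyd; replace y with (-d) by lra; ring).
  assert (Hyd2 : y - d <> 0) by (intro H; apply Hyd; replace y with d by lra; ring).
  assert (Hyd3 : -y + d <> 0) by (intro H; apply Hyd2; lra).
  assert (Hyd4 : -y - d <> 0) by (intro H; apply Hyd1; lra).
  assert (Hmy : -y <> 0) by lra.
  assert (Hyd5 : (-y)^2 - d^2 <> 0) by (replace ((-y)^2) with (y^2) by ring; auto).
  unfold L1, fxD, fyD. rewrite !calJ_eq.
  unfold J1, J1d, J2, J2x, J2y. rewrite !Nat.add_sub.
  rewrite !(rho_rc d k) by auto.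
  rewrite !(bigJ_form n1 al) by lra.
  rewrite !(bigJ_form k ga) by lra.
  rewrite !zz_negy by auto. rewrite !zz_neg, !zz_nd.
  set (b1 := 2 * INR k + be + ga + 1).
  set (c1 := (-1)^k * d).
  pose proof (rel_dF n1 al b1 (zz c1 y) ltac:(lra)) as HdA.
  pose proof (rel_G n1 al b1 (zz c1 y) ltac:(lra)) as HRA.
  pose proof (rel_dF k ga be (zz (d/y) (x/y)) ltac:(lra)) as HdB.
  pose proof (rel_G k ga be (zz (d/y) (x/y)) ltac:(lra)) as HRB.
  rewrite !HdA, !HdB. clear HdA HdB.
  set (FA := FP n1 al b1 (zz c1 y)) in *.
  set (GA := GP n1 al b1 (zz c1 y)) in *.
  set (dGA := dGP n1 al b1 (zz c1 y)) in *.
  set (FB := FP k ga be (zz (d/y) (x/y))) in *.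
  set (GB := GP k ga be (zz (d/y) (x/y))) in *.
  set (dGB := dGP k ga be (zz (d/y) (x/y))) in *.
  set (s1 := sP n1 al b1) in *. set (s2 := sP k ga be) in *.
  match goal with |- ?L = ?R =>
  match type of HRA with ?RA = 0 => match type of HRB with ?RB = 0 =>
  assert (E : L - R =
    (rc d k (- y) * ((d+x)/(2*x) * (FB + s2*((1 - - x / - y)/(1 + d / - y))*GB)
        + d*(x-y)/(2*x*y) * (FB + s2*((1 - x / - y)/(1 + d / - y))*GB)) * 2*y*(c1-y)/(y^2-d^2)) * RA
    + ((FA + s1*((1 - - y)/(1+c1))*GA) * rc d k (- y) * d*(y-1)*(y+d)/(y*(y^2-d^2))
        - (FA + s1*((1-y)/(1+c1))*GA) * rc d k y / y) * RB)
  end end end.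
  2: { rewrite HRA, HRB, !Rmult_0_r, Rplus_0_r in E. apply Rminus_diag_uniq; exact E. }
  clear HRA HRB. clearbody FA GA dGA FB GB dGB.
  assert (Hal : al + 1 <> 0) by lra. assert (Hga : ga + 1 <> 0) by lra.
  assert (H1d : 1 - d <> 0) by lra. assert (H1d' : 1 + d <> 0) by lra.
  assert (H1d2 : 1 - d^2 <> 0) by (intro H; assert (H' : (1-d)*(1+d) = 0) by (rewrite <- H; ring);
     apply Rmult_integral in H'; lra).
  unfold s1, s2, b1, c1, sP, muP, eP, rc, rcd, mu, zz, G1, G2, G3, G5, G6, G7, G8.
  replace ((-y)^2) with (y^2) by ring.
  destruct (Nat.Even_or_Odd k) as [[p ->]|[p ->]];
  destruct (Nat.Even_or_Odd n1) as [[m ->]|[m ->]].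
  all: rewrite ?Nat.even_add, ?Nat.even_even, ?Nat.even_odd, ?Nat.div2_double, ?Nat.div2_odd'; cbn [Bool.eqb Nat.even negb].
  all: rewrite ?plus_INR, ?mult_INR, ?Nat.add_1_r, ?pow_1_even, ?pow_1_odd, ?S_INR.
  all: rewrite ?INR_0.
  all: set (V := (y^2 - d^2)^p).
  all: field.
  all: repeat split; auto; first [replace (1 + -1*d) with (1-d) by ring | replace ((-1*d)^2) with (d^2) by ring]; auto.
  all: replace ((-1*d)^2) with (d^2) by ring; auto.
Qed.


Theorem proposition3p1 (alpha beta gamma delta : R) (n k : nat) :
  -1 < alpha -> -1 < beta -> -1 < gamma -> delta <> 1 -> delta <> -1 ->
  (k <= n)%nat ->
  exists fx fy : R -> R -> R,
    (forall x y, y <> 0 -> y ^ 2 <> delta ^ 2 ->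
       derivable_pt_lim (fun t => calJ alpha beta gamma delta n k t y) x (fx x y) /\
       derivable_pt_lim (fun t => calJ alpha beta gamma delta n k x t) y (fy x y)) /\
    (forall x y, x <> 0 -> y <> 0 -> y ^ 2 <> delta ^ 2 ->
       L1 alpha beta gamma delta (calJ alpha beta gamma delta n k) fx fy x y
       = mu alpha beta gamma n * calJ alpha beta gamma delta n k x y).
Proof.
  intros Ha Hb Hg Hd1 Hd2 Hkn.
  exists (fxD alpha beta gamma delta n k), (fyD alpha beta gamma delta n k). split.
  - intros x y Hy Hyd.
    assert (Hyd' : y^2 - delta^2 <> 0) by (intro H; apply Hyd; lra).
    assert (Hyd1 : y + delta <> 0) by (intro H; apply Hyd; replace y with (-delta) by lra; ring).
    split; apply is_derive_Reals; [apply dx_ok | apply dy_ok]; auto.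
  - intros x y Hx Hy Hyd.
    assert (Hyd' : y^2 - delta^2 <> 0) by (intro H; apply Hyd; lra).
    destruct (Nat.le_exists_sub k n Hkn) as [n1 [-> _]].
    apply main_id; auto.
Qed.
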